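(* Suppose there exists $C\ge0$ such that $d_{\mathcal{X}}(f(x,u),x_* )\le C(1+d_{\mathcal{X}}(x,x_* ))$ for all $x\in\mathcal{X}$ and $u\in\mathcal{U}$. Then $F(\underline{\mathcal{X}}\times\underline{\mathcal{U}})\subseteq\underline{\mathcal{X}}$ and the restriction $F:\underline{\mathcal{X}}\times\underline{\mathcal{U}}\to\underline{\mathcal{X}}$ is continuous.
   Context: $\mathbb{Z}_-=\{\dots,-2,-1\}$. $\mathcal{Z},\mathcal{U}$ are Polish spaces, $(\mathcal{X},d_{\mathcal{X}})$ is a Polish space with a complete metric, and $f:\mathcal{X}\times\mathcal{U}\to\mathcal{X}$ is continuous. $\underline{\mathcal{Z}}=\mathcal{Z}^{\mathbb{Z}_-}$ with the product topology; $V:\underline{\mathcal{Z}}\to\mathcal{U}^{\mathbb{Z}_-}$ is continuous and causal, and $\underline{\mathcal{U}}=V(\underline{\mathcal{Z}})$ carries the subspace topology of the product topology on $\mathcal{U}^{\mathbb{Z}_-}$. $\mathbf{w}=(w_t)_{t\le-1}\subseteq(0,1)$ is monotone with $\sum_tw_t=1$ and $|\mathbf{w}|:=\sup_{n\ge1}(\sup_{t\le-1}w_t/w_{t-n})^{1/n}<\infty$. Fix $x_*\in\mathcal{X}$. $\underline{\mathcal{X}}=\{\mathbf{x}\in\mathcal{X}^{\mathbb{Z}_-}:\sum_tw_td_{\mathcal{X}}(x_t,x_* )<\infty\}$ with metric $d_{\underline{\mathcal{X}}}(\mathbf{x}^1,\mathbf{x}^2)=\sum_tw_td_{\mathcal{X}}(x^1_t,x^2_t)$.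 $F:\mathcal{X}^{\mathbb{Z}_-}\times\mathcal{U}^{\mathbb{Z}_-}\to\mathcal{X}^{\mathbb{Z}_-}$ is given by $F(\mathbf{x},\mathbf{u})_t=f(x_{t-1},u_t)$. $\underline{\mathcal{X}}\times\underline{\mathcal{U}}$ carries the product of the $d_{\underline{\mathcal{X}}}$-topology and the topology of $\underline{\mathcal{U}}$. *)

(* Defs.v *)
From HB Require Import structures.
From mathcomp Require Import all_boot all_order all_algebra.
From mathcomp Require Import all_classical all_reals all_analysis.
Set Implicit Arguments. Unset Strict Implicit. Unset Printing Implicit Defensive.
Import Order.TTheory GRing.Theory Num.Theory.
Import numFieldNormedType.Exports.
Local Open Scope classical_set_scope.
Local Open Scope ring_scope.

(* Time convention: the index set Z_- = {..., -2, -1} is encoded by nat,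
   k : nat standing for the time t = -(k+1).  Hence t-1 corresponds to k.+1
   and "s <= t" corresponds to "k_t <= k_s". *)

Definition separable_space (T : topologicalType) : Prop :=
  exists D : set T, countable D /\ dense D.

Definition complete_compatible_metric (R : realType) (T : topologicalType)
  (d : T -> T -> R) : Prop :=
  (forall x y, 0 <= d x y) /\
      (forall x y, d x y = 0 <-> x = y) /\
      (forall x y, d x y = d y x) /\
      (forall x y z, d x z <= d x y + d y z) /\
      (forall (x : T) (A : set T),
          nbhs x A <-> (exists2 e : R, 0 < e & [set y | d x y < e] `<=` A)) /\
    (forall u : nat -> T,
        (forall e : R, 0 < e -> exists N : nat, forall m n : nat,
            (N <= m)%N -> (N <= n)%N -> d (u m) (u n) < e) ->
        exists l : T, forall e : R, 0 < e -> exists N : nat, forall n : nat,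
            (N <= n)%N -> d l (u n) < e).

Definition polish (R : realType) (T : topologicalType) : Prop :=
  separable_space T /\ exists d : T -> T -> R, complete_compatible_metric d.

Definition mdist_complete (R : realType) (X : metricType R) : Prop :=
  forall u : nat -> X,
    (forall e : R, 0 < e -> exists N : nat, forall m n : nat,
        (N <= m)%N -> (N <= n)%N -> mdist (u m) (u n) < e) ->
    exists l : X, forall e : R, 0 < e -> exists N : nat, forall n : nat,
        (N <= n)%N -> mdist l (u n) < e.

Definition causal (A B : Type) (V : (nat -> A) -> (nat -> B)) : Prop :=
  forall (z z' : nat -> A) (k : nat),
    (forall j : nat, (k <= j)%N -> z j = z' j) -> V z k = V z' k.

(* |w| < oo, where |w| = sup_{n>=1} (sup_t w_t / w_{t-n})^{1/n}. *)
Definition finite_rate (R : realType) (w : nat -> R) : Prop :=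
  exists M : R, forall (n k : nat), (0 < n)%N ->
    (w k / w (k + n)%N) `^ (n%:R)^-1 <= M.

Definition Xbar (R : realType) (X : metricType R) (w : nat -> R) (xs : X)
  : set (nat -> X) :=
  [set x | cvgn (series (fun k => w k * mdist (x k) xs))].

Definition dXbar (R : realType) (X : metricType R) (w : nat -> R)
  (x1 x2 : nat -> X) : R :=
  limn (series (fun k => w k * mdist (x1 k) (x2 k))).

Definition Fmap (X U : Type) (f : X -> U -> X) (x : nat -> X) (u : nat -> U)
  : nat -> X := fun k => f (x k.+1) (u k).

(* Main.v *)
Require Import Defs.
From HB Require Import structures.
From mathcomp Require Import all_boot all_order all_algebra.
From mathcomp Require Import all_classical all_reals all_analysis.
From mathcomp Require Import ring lra.
Import Order.TTheory GRing.Theory Num.Theory.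
Import numFieldNormedType.Exports.
Local Open Scope classical_set_scope.
Local Open Scope ring_scope.

Section H.
Variable RR : realType.
Implicit Types u : nat -> RR.


Lemma ps_le_lim u : (forall k, 0 <= u k) -> cvgn (series u) ->
  forall n, series u n <= limn (series u).
Proof.
move=> u0 cu n; apply: nondecreasing_cvgn_le => //.
rewrite seriesEnat; exact: (@nondecreasing_series _ u xpredT 0%N).
Qed.

Lemma lim_le_bound u B : cvgn (series u) -> (forall n, series u n <= B) ->
  limn (series u) <= B.
Proof. by move=> cu hB; apply: limr_le => //; apply: nearW. Qed.

Lemma shift_le_lim u : (forall k, 0 <= u k) -> cvgn (series u) ->
  forall n, series (fun k => u k.+1) n <= limn (series u).
Proof.
move=> u0 cu n; apply: le_trans (ps_le_lim _ u0 cu n.+1); rewrite /series /=.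

rewrite /series /= big_nat_recl //= lerDr //.
Qed.

Lemma shift_cvg u : (forall k, 0 <= u k) -> cvgn (series u) ->
  cvgn (series (fun k => u k.+1)).
Proof.
move=> u0 cu; apply: nondecreasing_is_cvgn.
  rewrite seriesEnat; exact: (@nondecreasing_series _ (fun k => u k.+1) xpredT 0%N).
exists (limn (series u)) => _ [n _ <-]; exact: shift_le_lim.
Qed.

Lemma tail_small u : (forall k, 0 <= u k) -> cvgn (series u) ->
  forall eps, 0 < eps -> exists K, forall n,
    \sum_(0 <= k < n) (if (K <= k)%N then u k else 0) <= eps.
Proof.
move=> u0 cu eps e0.
have := cu => /cvgrPdist_lt /(_ eps e0) [K _ HK].
exists K => n.
have zero m : (m <= K)%N -> \sum_(0 <= k < m) (if (K <= k)%N then u k else 0) = 0.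
  move=> mK; rewrite big_nat_cond big1 // => k /andP[/andP[_ km] _].
  by rewrite leqNgt (leq_trans km mK).
case: (leqP n K) => nK; first by rewrite zero //; exact: ltW.
rewrite (@big_cat_nat _ _ _ K 0 n _ _ (leq0n K) (ltnW nK)) /= zero // add0r.
have -> : \sum_(K <= i < n) (if (K <= i)%N then u i else 0) = \sum_(K <= i < n) u i.
  by apply: eq_big_nat => k /andP[-> _].
rewrite -sub_series_geq; last exact: ltnW.
apply: le_trans (ltW (HK K (leqnn K))).
apply: le_trans (ler_norm _).
by rewrite lerB // ps_le_lim.
Qed.

Lemma fin_min (g : nat -> RR) K : (forall k, 0 < g k) ->
  exists2 d : RR, 0 < d & forall k, (k < K)%N -> d <= g k.
Proof.
move=> g0; elim: K => [|K [d d0 hd]]; first by exists 1.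
exists (Num.min d (g K)); first by rewrite lt_min d0 g0.
move=> k; rewrite ltnS leq_eqVlt => /orP[/eqP ->|kK]; first by rewrite ge_min lexx orbT.
by rewrite ge_min hd.
Qed.
End H.

Lemma nbhs_fin (U : topologicalType) (u : {ptws nat -> U}) (B : nat -> set U) K :
  (forall k, nbhs (u k) (B k)) ->
  nbhs u [set v : {ptws nat -> U} | forall k, (k < K)%N -> B k (v k)].
Proof.
move=> hB; elim: K => [|K IH]; first by apply: filterE => v k.
have hK : nbhs u [set v : {ptws nat -> U} | B K (v K)].
  have := (@proj_continuous nat (fun _ => U) K u (B K) (hB K)).
  by [].
apply: filterS (filterI IH hK) => v [h1 h2] k.
by rewrite ltnS leq_eqVlt => /orP[/eqP ->|] //; exact: h1.
Qed.

Theorem lemmaB2 (R : realType) (Z U : topologicalType) (X : metricType R)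
  (HZ : polish R Z) (HU : polish R U)
  (HXsep : separable_space X) (HXcomp : mdist_complete X)
  (f : X -> U -> X) (Hf : continuous (fun p : X * U => f p.1 p.2))
  (V : {ptws nat -> Z} -> {ptws nat -> U}) (HVc : continuous V) (HVcaus : causal V)
  (w : nat -> R) (Hw01 : forall k, 0 < w k < 1)
  (Hwmon : nondecreasing_seq w \/ nonincreasing_seq w)
  (Hwsum : series w @ \oo --> (1 : R)) (Hwrate : finite_rate w)
  (xs : X)
  (Hgrowth : exists C : R, 0 <= C /\
     forall (x : X) (u : U), mdist (f x u) xs <= C * (1 + mdist x xs)) :
  (forall (x : nat -> X) (u : nat -> U),
      Xbar w xs x -> range V u -> Xbar w xs (Fmap f x u)) /\
  (forall (x : nat -> X) (u : {ptws nat -> U}),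
      Xbar w xs x -> range V u ->
      forall e : R, 0 < e ->
      exists2 delta : R, 0 < delta &
      exists2 N : set {ptws nat -> U}, nbhs u N &
        forall (x' : nat -> X) (u' : {ptws nat -> U}),
          Xbar w xs x' -> range V u' -> dXbar w x x' < delta -> N u' ->
          dXbar w (Fmap f x u) (Fmap f x' u') < e).

Proof.
have [C [C0 HC]] := Hgrowth.
have [M HM] := Hwrate.
have wpos k : 0 < w k by case/andP: (Hw01 k).
have wge0 k : 0 <= w k by exact: ltW.
have hwM k : w k <= M * w k.+1.
  have := HM 1%N k isT; rewrite invr1 powRr1; last by rewrite divr_ge0.
  by rewrite addn1 ler_pdivrMr.
have M0 : 0 <= M.
  have := hwM 0%N; move/(lt_le_trans (wpos 0%N)); rewrite pmulr_lgt0 // => /ltW //.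
have cw : cvgn (series w) := cvgP _ Hwsum.
have lw : limn (series w) = 1 by exact: cvg_lim.
pose b (y : nat -> X) := fun k => w k.+1 * mdist (y k.+1) xs.
have a0 : forall (y : nat -> X) k, 0 <= w k * mdist (y k) xs.
  by move=> y k; apply: mulr_ge0 (wge0 k) (mdist_ge0 _ _).
have b0 : forall y k, 0 <= b y k by move=> y k; exact: a0.
have cT : forall y, Xbar w xs y -> forall c1 c2 : R,
    cvgn (series (fun k => c1 * w k + c2 * b y k)).
  move=> y Hy c1 c2.
  have cb : cvgn (series (b y)).
    have := @shift_cvg _ (fun k => w k * mdist (y k) xs) (a0 y) Hy; exact.
  have := is_cvg_seriesD (@is_cvg_seriesZ _ _ c1 cw) (@is_cvg_seriesZ _ _ c2 cb).
  suff -> : (fun k => c1 * w k + c2 * b y k) = c1 *: w + c2 *: b y by [].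
  by apply/funext.
have bnd : forall (y : nat -> X) (v : nat -> U) k,
    w k * mdist (f (y k.+1) (v k)) xs <= C * w k + (C * M) * b y k.
  move=> y v k; rewrite /b.
  apply: le_trans (ler_wpM2l (wge0 k) (HC _ _)) _.
  have h1 := hwM k; have h2 := mdist_ge0 (y k.+1) xs.
  have h3 : 0 <= (M * w k.+1 - w k) * (C * mdist (y k.+1) xs).
    by apply: mulr_ge0; [rewrite subr_ge0 | apply: mulr_ge0].
  nra.
have P1 : forall (y : nat -> X) (v : nat -> U), Xbar w xs y -> Xbar w xs (Fmap f y v).
  move=> y v Hy; rewrite /Xbar /Fmap /=.
  apply: (series_le_cvg _ _ _ (cT y Hy C (C * M))).
  - by move=> k; exact: mulr_ge0 (wge0 k) (mdist_ge0 _ _).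
  - by move=> k; exact: addr_ge0 (mulr_ge0 C0 (wge0 k)) (mulr_ge0 (mulr_ge0 C0 M0) (b0 y k)).
  - exact: bnd.
split; first by move=> y v Hy _; exact: P1.
have CM0 : 0 <= C * M by exact: mulr_ge0.
have csg : forall y y' : nat -> X, Xbar w xs y -> Xbar w xs y' ->
    cvgn (series (fun k => w k * mdist (y k) (y' k))).
  move=> y y' Hy Hy'.
  apply: (series_le_cvg _ _ _ (is_cvg_seriesD Hy Hy')).
  - by move=> k; exact: mulr_ge0 (wge0 k) (mdist_ge0 _ _).
  - by move=> k; exact: addr_ge0 (a0 y k) (a0 y' k).
  - move=> k; apply: (@le_trans _ _ (w k * mdist (y k) xs + w k * mdist (y' k) xs)) => //.
    have := ler_wpM2l (wge0 k) (metric_triangle (y k) xs (y' k)).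
    by rewrite (metric_sym xs (y' k)) mulrDr.
move=> x u Hx _ e e0.
pose e4 := e / 4.
have e40 : 0 < e4 by rewrite /e4 divr_gt0.
have hd : forall k, exists q : R * set U, [/\ 0 < q.1, nbhs (u k) q.2 &
    forall y v, mdist (x k.+1) y < q.1 -> q.2 v ->
      mdist (f (x k.+1) (u k)) (f y v) < e4].
  move=> k.
  have := Hf (x k.+1, u k) _ (nbhsx_ballx (f (x k.+1) (u k)) _ e40).
  move=> [[A B] /= [nA nB] AB].
  move: nA => /nbhs_ballP [r /= r0 rA].
  exists (r, B); split => // y v xy Bv.
  have : ball (f (x k.+1) (u k)) e4 (f y v).
    by apply: (AB (y, v)); split => //=; apply: rA; rewrite ballEmdist.
  by rewrite ballEmdist.
have [p Hp] := choice hd.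
have p1 : forall k, 0 < (p k).1 by move=> k; case: (Hp k).
pose T := fun k => (2 * C) * w k + (2 * C * M) * b x k.
have T0 : forall k, 0 <= T k.
  move=> k; apply: addr_ge0; apply: mulr_ge0 => //; try exact: mulr_ge0.
  by apply: mulr_ge0 => //; apply: mulr_ge0.
have [K HK] := @tail_small _ T T0 (cT x Hx (2 * C) (2 * C * M)) e4 e40.
have [dh dh0 hdh] := @fin_min _ (fun k => (p k).1 * w k.+1) K
  (fun k => mulr_gt0 (p1 k) (wpos k.+1)).
have CM1 : 0 < C * M + 1 by lra.
exists (Num.min dh (e4 / (C * M + 1))).
  by rewrite lt_min dh0 /=; apply: divr_gt0.
exists [set v : {ptws nat -> U} | forall k, (k < K)%N -> (p k).2 (v k)].
  by apply: (@nbhs_fin U u (fun k => (p k).2) K) => k; case: (Hp k).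
move=> x' u' Hx' _ dxx' Nu'.
have cs := csg x x' Hx Hx'.
set D := dXbar w x x' in dxx'.
have s0 : forall k, 0 <= w k * mdist (x k) (x' k).
  by move=> k; exact: mulr_ge0 (wge0 k) (mdist_ge0 _ _).
have shD := @shift_le_lim _ _ s0 cs.
have D0 : 0 <= D.
  by apply: le_trans (shD 0%N); rewrite /series /= big_geq.
have single : forall j, w j.+1 * mdist (x j.+1) (x' j.+1) <= D.
  move=> j; apply: le_trans (@ps_le_lim _ _ s0 cs j.+2).
  rewrite seriesSr lerDr /series /=; exact: sumr_ge0.
have tb : forall k, w k * mdist (f (x k.+1) (u k)) (f (x' k.+1) (u' k)) <=
    e4 * w k + (if (K <= k)%N then T k else 0)
    + C * M * (w k.+1 * mdist (x k.+1) (x' k.+1)).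
  move=> k.
  have sk : 0 <= C * M * (w k.+1 * mdist (x k.+1) (x' k.+1)).
    exact: mulr_ge0 CM0 (s0 k.+1).
  have ew : 0 <= e4 * w k by apply: mulr_ge0 (ltW e40) (wge0 k).
  case: (ltnP k K) => kK.
  - rewrite addr0.
    have hk : mdist (x k.+1) (x' k.+1) < (p k).1.
      have t2 : D < (p k).1 * w k.+1.
        apply: lt_le_trans dxx' _; apply: le_trans (hdh k kK).
        by rewrite ge_min lexx.
      have : mdist (x k.+1) (x' k.+1) * w k.+1 < (p k).1 * w k.+1.
        by rewrite mulrC; exact: le_lt_trans (single k) t2.
      by rewrite ltr_pM2r.
    have hd2 : mdist (f (x k.+1) (u k)) (f (x' k.+1) (u' k)) < e4.
      by case: (Hp k) => _ _; apply => //; apply: Nu'.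
    have := ler_wpM2l (wge0 k) (ltW hd2).
    lra.
  -
    have f1 : mdist (f (x k.+1) (u k)) (f (x' k.+1) (u' k)) <=
        mdist (f (x k.+1) (u k)) xs + mdist (f (x' k.+1) (u' k)) xs.
      have := metric_triangle (f (x k.+1) (u k)) xs (f (x' k.+1) (u' k)).
      by rewrite (metric_sym xs (f (x' k.+1) (u' k))).
    have g1 := ler_wpM2l (wge0 k) f1.
    have g2 := bnd x u k; have g3 := bnd x' u' k.
    have g4 : b x' k <= w k.+1 * mdist (x k.+1) (x' k.+1) + b x k.
      have := ler_wpM2l (wge0 k.+1) (metric_triangle (x' k.+1) (x k.+1) xs).
      by rewrite /b (metric_sym (x' k.+1) (x k.+1)) mulrDr.
    have g5 := ler_wpM2l CM0 g4.
    rewrite /T.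
    nra.
rewrite /dXbar.
apply: (le_lt_trans (lim_le_bound _ _ (3 * e4) (csg _ _ (P1 x u Hx) (P1 x' u' Hx')) _)); last first.
  by rewrite /e4; lra.
move=> n.
apply: (le_trans (_ : _ <= \sum_(0 <= k < n) (e4 * w k + (if (K <= k)%N then T k else 0)
    + C * M * (w k.+1 * mdist (x k.+1) (x' k.+1))))).
  by rewrite /series /=; apply: ler_sum => k _; exact: tb.
rewrite big_split big_split /= -mulr_sumr -mulr_sumr.
have h1 : \sum_(0 <= k < n) w k <= 1.
  by rewrite -lw; exact: (@ps_le_lim _ w wge0 cw n).
have h2 := HK n.
have h3 : \sum_(0 <= k < n) w k.+1 * mdist (x k.+1) (x' k.+1) <= D := shD n.
have hDe : D <= e4 / (C * M + 1).
  apply: ltW; apply: lt_le_trans dxx' _; by rewrite ge_min lexx orbT.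
rewrite ler_pdivlMr // in hDe.
have h4 := ler_wpM2l CM0 h3.
have h5 := ler_wpM2l (ltW e40) h1.
nra.
Qed.
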